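(* Let $m\ge 2$ and $s,\ell,r_1,\dots,r_m\ge 1$ be integers, let $n=\sum_{i=1}^m(\ell+r_i)$ and $k=m\ell-s$, and let $\mathcal C$ be an $[n,k,\ell;r_1,\dots,r_m]$-PMDS code over a finite field $\mathbb{F}_q$. Then $\mathcal C$ has a generator matrix of the form $G=(B_1\mid\dots\mid B_m)$ where $B_i=(C_i\mid D_i)$ with $C_i\in\mathbb{F}_q^{k\times\ell}$ and $D_i\in\mathbb{F}_q^{k\times r_i}$ for $i=1,\dots,m$, and the matrix $G_C=(C_1\mid\dots\mid C_m)\in\mathbb{F}_q^{k\times m\ell}$ is of the form $G_C=[I_k\mid A]$ with $A\in\mathbb{F}_q^{k\times s}$ superregular.
   Context: A matrix is superregular if every square submatrix of it is nonsingular. An $[n,k]$-MDS code over a field $\mathbb{F}$ is a linear code in $\mathbb{F}^n$ of dimension $k$ and minimum Hamming distance $n-k+1$. PMDS codes: let $\ell,m,r_1,\dots,r_m$ be positive integers, $n=\sum_{i=1}^m(r_i+\ell)$, and $C\subseteq\mathbb{F}^n$ a linear code of dimension $k<n$ with generator matrix $G=(B_1\mid\dots\mid B_m)$, $B_i\in\mathbb{F}^{k\times(r_i+\ell)}$. Then $C$ is an $[n,k,\ell;r_1,\dots,r_m]$-PMDS code if (i) for each $i$ the row space of $B_i$ is an $[r_i+\ell,\ell]$-MDS code, and (ii) for any choice of $r_i$ erased coordinates in the $i$-th block for every $i$, the code obtained from $C$ by puncturing these coordinates is an $[m\ell,k]$-MDS code. *)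

(* Defs.v *)
From HB Require Import structures.
From mathcomp Require Import all_boot all_order all_algebra.
Set Implicit Arguments. Unset Strict Implicit. Unset Printing Implicit Defensive.
Import GRing.Theory.
Local Open Scope ring_scope.

(* Linear codes of length N are represented by generator matrices
   M : 'M[F]_(K, N); the code is the row space of M. *)

Definition wt (F : fieldType) (N : nat) (v : 'rV[F]_N) : nat :=
  #|[set j : 'I_N | v 0 j != 0]|.

Definition is_MDS (F : fieldType) (p N K : nat) (M : 'M[F]_(p, N)) : Prop :=
  [/\ \rank M = K,
      (forall v : 'rV[F]_N, (v <= M)%MS -> v != 0 -> (N - K + 1 <= wt v)%N) &
      (exists2 v : 'rV[F]_N, (v <= M)%MS /\ v != 0 & wt v = (N - K + 1)%N)].

Definition puncture (F : fieldType) (p N : nat) (M : 'M[F]_(p, N))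
    (S : {set 'I_N}) : 'M[F]_(p, #|S|) :=
  colsub (fun j : 'I_#|S| => enum_val j) M.

Definition blockgen (F : fieldType) (m k l : nat) (r : 'I_m -> nat)
    (B : forall i : 'I_m, 'M[F]_(k, l + r i)) :
    'M[F]_(k, \sum_(i < m) (l + r i)) :=
  \mxrow_(i < m) B i.

Definition is_PMDS (F : fieldType) (m k l : nat) (r : 'I_m -> nat)
    (B : forall i : 'I_m, 'M[F]_(k, l + r i)) : Prop :=
  [/\ (k < \sum_(i < m) (l + r i))%N,
      row_free (blockgen B),
      (forall i : 'I_m, is_MDS l (B i)) &
      (forall E : forall i : 'I_m, {set 'I_(l + r i)},
         (forall i, #|E i| = r i) ->
         is_MDS k
           (\mxrow_(i < m) puncture (B i) (~: E i)))].

Definition superregular (F : fieldType) (a b : nat) (A : 'M[F]_(a, b)) : Prop :=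
  forall (p : nat) (f : 'I_p -> 'I_a) (g : 'I_p -> 'I_b),
    injective f -> injective g -> \det (mxsub f g A) != 0.

Lemma ks_eq (m l s : nat) : (s <= m * l)%N ->
  (m * l - s + s = \sum_(i < m) l)%N.
Proof. by move=> hs; rewrite subnK // sum_nat_const card_ord. Qed.

(* Main.v *)
Require Import Defs.
From HB Require Import structures.
From mathcomp Require Import all_boot all_order all_algebra.
Import GRing.Theory.
Local Open Scope ring_scope.
From mathcomp Require Import zify.

Section H.
Variable F : fieldType.

Lemma wtE N (v : 'rV[F]_N) : wt v = (\sum_j nat_of_bool (v 0%R j != 0%R))%N.
Proof.
rewrite /wt -sum1_card big_mkcond /=; apply: eq_bigr => j _.
by rewrite inE; case: (v 0 j != 0).
Qed.

Lemma wt_mxrow q (q_ : 'I_q -> nat) (V : forall j, 'rV[F]_(q_ j)) :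
  wt (\mxrow_j V j) = (\sum_j wt (V j))%N.
Proof.
rewrite wtE; under [RHS]eq_bigr do rewrite wtE.
under eq_bigr do rewrite mxE.
rewrite sig_big_dep/= (reindex _ tagnat.sig_bij_on)/=.
by apply: eq_bigr.
Qed.

Lemma wt_row_mx a b (x : 'rV[F]_a) (y : 'rV[F]_b) :
  wt (row_mx x y) = (wt x + wt y)%N.
Proof.
rewrite !wtE big_split_ord /=.
by congr addn; apply: eq_bigr => j _; rewrite ?row_mxEl ?row_mxEr.
Qed.

Lemma wt_castmx a b (e : a = b) (x : 'rV[F]_a) :
  wt (castmx (erefl 1%N, e) x) = wt x.
Proof. by case: b / e; rewrite castmx_id. Qed.

Lemma wt_puncture N (v : 'rV[F]_N) (S : {set 'I_N}) :
  wt (puncture v S) = #|[set j in S | v 0 j != 0]|.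
Proof.
rewrite /wt -(card_imset _ enum_val_inj); apply: eq_card => x.
rewrite inE; apply/imsetP/andP => [[j] | [xS vx]].
  by rewrite inE mxE => vj ->; rewrite enum_valP.
exists (enum_rank_in xS x); last by rewrite enum_rankK_in.
by rewrite inE mxE enum_rankK_in.
Qed.

Lemma wt_le N (v : 'rV[F]_N) : (wt v <= N)%N.
Proof. by rewrite /wt -[X in (_ <= X)%N]card_ord max_card. Qed.

End H.

Definition Eset (l r : nat) : {set 'I_(l + r)} := [set rshift l j | j : 'I_r].

Lemma card_Eset l r : #|Eset l r| = r.
Proof. by rewrite /Eset card_imset ?cardsT ?card_ord //; apply: rshift_inj. Qed.

Lemma wt_punct_E (F : fieldType) l r (v : 'rV[F]_(l + r)) :
  wt (puncture v (~: Eset l r)) = wt (lsubmx v).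
Proof.
rewrite wt_puncture /wt -(card_imset _ (@lshift_inj l r)).
apply: eq_card => x; rewrite !inE.
case: (split_ordP x) => [j ->|j ->].
  rewrite mem_imset ?inE; last exact: lshift_inj.
  rewrite mxE.
  have -> : lshift r j \in Eset l r = false.
    apply/imsetP => -[y _ /(congr1 val)] /=. 
    by move=> e; have := ltn_ord j; rewrite e ltnNge leq_addr.
  by [].
have -> : rshift l j \in Eset l r by apply/imsetP; exists j.
symmetry; apply/imsetP => -[y _ /(congr1 val)] /= e.
by have := ltn_ord y; rewrite -e ltnNge leq_addr.
Qed.

Lemma mulmx_castr (R : fieldType) a b c (e : b = c) (u : 'M[R]_(1, a))
  (M : 'M[R]_(a, b)) :
  u *m castmx (erefl a, e) M = castmx (erefl 1%N, e) (u *m M).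
Proof. by case: c / e; rewrite !castmx_id. Qed.

Lemma mulmx_castr' (R : fieldType) a a' b c (e : b = c) (u : 'M[R]_(a', a))
  (M : 'M[R]_(a, b)) :
  u *m castmx (erefl a, e) M = castmx (erefl a', e) (u *m M).
Proof. by case: c / e; rewrite !castmx_id. Qed.

Lemma wt0 (F : fieldType) N : wt (0 : 'rV[F]_N) = 0%N.
Proof. by rewrite wtE big1 // => j _; rewrite mxE eqxx. Qed.

Theorem theorem15 (F : finFieldType) (m s l : nat) (r : 'I_m -> nat)
  (hm : (2 <= m)%N) (hs1 : (1 <= s)%N) (hl : (1 <= l)%N)
  (hr : forall i, (1 <= r i)%N) (hs : (s <= m * l)%N)
  (B : forall i : 'I_m, 'M[F]_(m * l - s, l + r i)) :
  is_PMDS B ->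
  exists B' : forall i : 'I_m, 'M[F]_(m * l - s, l + r i),
    [/\ (blockgen B' == blockgen B)%MS, row_free (blockgen B') &
        exists A : 'M[F]_(m * l - s, s),
          superregular A /\
          \mxrow_(i < m) lsubmx (B' i) =
            castmx (erefl (m * l - s)%N, ks_eq hs) (row_mx 1%:M A)].
Proof.
move=> hP.
set k := (m * l - s)%N.
pose GC : 'M[F]_(k, \sum_(i < m) l) := \mxrow_(i < m) lsubmx (B i).
have Kw : forall u : 'rV[F]_k, u != 0 -> (s < wt (u *m GC))%N.
  move=> u u0.
  case: hP => _ _ _ hE.
  case: (hE (fun i => Eset l (r i)) (fun i => card_Eset l (r i))) => hrk hw _.
  set M' := \mxrow_i puncture (B i) (~: Eset l (r i)).
  have hfree : row_free M' by rewrite /row_free hrk.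
  have hu : u *m M' != 0 by rewrite mulmx_free_eq0.
  have := hw (u *m M') (submxMl u M') hu.
  have -> : wt (u *m M') = wt (u *m GC).
    rewrite /M' /GC !mul_mxrow !wt_mxrow; apply: eq_bigr => i _.
    by rewrite /puncture mulmx_colsub -/(puncture _ _) wt_punct_E mulmx_lsub.
  have -> : (\sum_i #|~: Eset l (r i)|)%N = (m * l)%N.
    under eq_bigr do rewrite cardsCs setCK card_ord card_Eset addnK.
    by rewrite sum_nat_const card_ord.
  rewrite /k; lia.
pose G2 : 'M[F]_(k, k + s) := castmx (erefl k, esym (ks_eq hs)) GC.
have wG2 : forall u : 'rV[F]_k, wt (u *m GC) = wt (u *m G2).
  by move=> u; rewrite /G2 mulmx_castr wt_castmx.
pose P : 'M[F]_k := lsubmx G2.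
pose A0 : 'M[F]_(k, s) := rsubmx G2.
have Pu : P \in unitmx.
  rewrite unitmxE unitfE; apply/negP => /det0P [u u0 uP].
  have := Kw u u0.
  rewrite wG2 -(hsubmxK G2) mul_mx_row -/P uP wt_row_mx wt0 add0n.
  by rewrite ltnNge wt_le.
have GCE : GC = castmx (erefl k, ks_eq hs) G2.
  by rewrite /G2 castmx_comp castmx_id.
have PG2 : invmx P *m G2 = row_mx 1%:M (invmx P *m A0).
  by rewrite -{1}(hsubmxK G2) mul_mx_row -/P -/A0 mulVmx.
have hfull : row_full (invmx P) by rewrite row_full_unit unitmx_inv.
case: (hP) => _ hfreeB _ _.
exists (fun i => invmx P *m B i); split.
- by rewrite /blockgen -mul_mxrow; apply/eqmxP; apply: eqmxMfull.
- rewrite /row_free /blockgen -mul_mxrow (eqmx_rank (B := blockgen B)) //.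
  by apply/eqmxP; apply: eqmxMfull.
exists (invmx P *m A0); split; last first.
  rewrite -(eq_mxrow (fun i => mulmx_lsub (invmx P) (B i))) -mul_mxrow.
  by rewrite -/GC GCE mulmx_castr' PG2.
set A := invmx P *m A0.
move=> p f g finj ginj; apply/negP => /det0P [u u0 uM].
pose w : 'rV[F]_k := u *m rowsub f 1%:M.
have wE : forall j, w 0 j = \sum_(j' < p) u 0 j' * (f j' == j)%:R.
  by move=> j; rewrite !mxE; apply: eq_bigr => j' _; rewrite !mxE.
have w0 : w != 0.
  apply: contra u0 => /eqP w0; apply/eqP/rowP => j.
  have := congr1 (fun x : 'rV[F]_k => x 0 (f j)) w0; rewrite /= wE mxE => e; rewrite mxE -e.
  rewrite (bigD1 j) //= eqxx mulr1 big1 ?addr0 // => j' nj.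
  by rewrite (inj_eq finj) (negbTE nj) mulr0.
pose u' := w *m invmx P.
have u'0 : u' != 0.
  apply: contra w0 => /eqP e; apply/eqP.
  by rewrite -(mulmxKV Pu w) -/u' e mul0mx.
have := Kw u' u'0.
rewrite wG2 /u' -mulmxA PG2 -/A mul_mx_row mulmx1 wt_row_mx.
have hw1 : (wt w <= p)%N.
  rewrite /wt; apply: (@leq_trans #|f @: [set: 'I_p]|).
    apply: subset_leq_card; apply/subsetP => j; rewrite inE wE => nz.
    case: (pickP (fun j' => f j' == j)) => [j' /eqP <-|none].
      by apply/imsetP; exists j'; rewrite ?inE.
    by move: nz; rewrite big1 ?eqxx // => j' _; rewrite none mulr0.
  by rewrite (leq_trans (leq_imset_card _ _)) // cardsT card_ord.
have xg : forall j, (w *m A) 0 (g j) = 0.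
  move=> j.
  have : colsub g (w *m A) = 0.
    rewrite -mulmx_colsub /w -mulmxA mul_rowsub_mx mul1mx.
    rewrite -uM; congr (_ *m _); apply/matrixP => a b; rewrite !mxE //.
  by move/matrixP/(_ 0 j); rewrite !mxE.
have hps : (p <= s)%N.
  by rewrite -(card_ord p) -(card_ord s); apply: leq_card ginj.
have hw2 : (wt (w *m A) <= s - p)%N.
  rewrite /wt.
  have : #|~: [set g x | x in [set: 'I_p]]| = (s - p)%N.
    by rewrite cardsCs setCK card_imset // cardsT !card_ord.
  move=> <-; apply: subset_leq_card; apply/subsetP => j; rewrite !inE.
  apply: contra => /imsetP [x _ ->]; by rewrite xg eqxx.
lia.
Qed.
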